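(* Let $5\leq p_1<\cdots<p_m$ be $m$ distinct primes. Then the set of integers $x$ such that for each $i=1,\ldots,m$ there is an odd integer $k_i$ with $x=k_ip_i+4N(p_i/6)$ or $x=k_ip_i-4N(p_i/6)$ (the $m$-fold non-ranks of $p_1,\ldots,p_m$) is the union of exactly $2^m$ pairwise distinct arithmetic progressions (residue classes) with common difference $2p_1\cdots p_m$.
   Context: $N(x)$ denotes the integer nearest to the real number $x$. *)

(* Defs.v *)
From mathcomp Require Import all_boot all_order all_algebra.
Set Implicit Arguments. Unset Strict Implicit. Unset Printing Implicit Defensive.
Import Order.TTheory GRing.Theory Num.Theory.
Local Open Scope ring_scope.

(* N(x): the integer nearest to the rational x (ties rounded up;
   ties never occur in the statement since p/6 is never a half-integer
   for a prime p >= 5). *)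
Definition nearest_int (x : rat) : int := Num.floor (x + 1 / 2).

Definition nonrank (p : nat) (x : int) : Prop :=
  exists k : int, ~~ (2 %| k)%Z /\
    (x = k * p%:Z + 4 * nearest_int (p%:Q / 6%:Q)
     \/ x = k * p%:Z - 4 * nearest_int (p%:Q / 6%:Q)).

Definition mfold_nonrank (ps : seq nat) (x : int) : Prop :=
  forall p, p \in ps -> nonrank p x.

(* Main.v *)
Require Import Defs.
From mathcomp Require Import all_boot all_order all_algebra.
From mathcomp Require Import zify ring lra.
Import Order.TTheory GRing.Theory Num.Theory.
Local Open Scope ring_scope.

Definition r4 (p : nat) : nat := (4 * ((p + 3) %/ 6))%N.

Lemma r4_lt p : (5 <= p)%N -> (0 < r4 p < p)%N.
Proof. rewrite /r4 => H; lia. Qed.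

Lemma nearestE (p : nat) : nearest_int (p%:Q / 6%:Q) = ((p + 3) %/ 6)%N%:Z.
Proof.
rewrite /nearest_int; apply: Num.Theory.floor_def.
set m := ((p + 3) %/ 6)%N.
have h1 : (6 * m <= p + 3)%N by rewrite /m; lia.
have h2 : (p + 3 < 6 * m + 6)%N by rewrite /m; lia.
have e1 : ((6 * m)%:R <= (p + 3)%:R :> rat) by rewrite ler_nat.
have e2 : ((p + 3)%:R < (6 * m + 6)%:R :> rat) by rewrite ltr_nat.
rewrite !natrD in e1 e2. have E : forall n : nat, (n%:Z)%:~R = n%:R :> rat by [].
rewrite intrD (E m) (E p) (E 6%N).
apply/andP; split; lra.
Qed.

Lemma podd p : prime p -> (5 <= p)%N -> odd p.
Proof. by move=> /even_prime [->|]. Qed.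

Lemma nonrank_char p (y : int) : prime p -> (5 <= p)%N ->
  nonrank p y <-> (y %% 2 = 1)%Z /\ ((y %% p)%Z = (r4 p)%:Z \/ (y %% p)%Z = p%:Z - (r4 p)%:Z).
Proof.
move=> pp p5; have hr := @r4_lt p p5.
have ho : p = (2 * p./2 + 1)%N by rewrite -{1}(odd_double_half p) podd // -muln2; lia.
rewrite /nonrank nearestE.
have -> : 4 * ((p + 3) %/ 6)%N%:Z = (r4 p)%:Z by rewrite /r4 PoszM.
have hr4 : (r4 p = 4 * ((p + 3) %/ 6))%N by [].
split.
- move=> [k [hk [->|->]]]; split.
  + nia.
  + left; rewrite modzMDl modz_small //; lia.
  + nia.
  + right; rewrite (_ : k * p%:Z - (r4 p)%:Z = (k - 1) * p%:Z + (p%:Z - (r4 p)%:Z)); last by ring.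
    rewrite modzMDl modz_small //; lia.
- move=> [h2 [h|h]]; have := divz_eq y p; rewrite h => e.
  + exists (y %/ p)%Z; split; [nia | by left].
  + exists ((y %/ p)%Z + 1); split; [nia | right; lia].
Qed.

Local Close Scope ring_scope.

Lemma count_iota_sum (P : pred nat) n : count P (iota 0 n) = \sum_(i < n) P i.
Proof.
rewrite -sum1_count big_mkcond /= -(big_mkord xpredT (fun i => nat_of_bool (P i))).
rewrite /index_iota subn0; apply: eq_bigr => i _; by case: (P i).
Qed.

Lemma crt_count (a b : nat) (A B : pred nat) : (0 < a)%N -> (0 < b)%N -> coprime a b ->
  count (fun c => A (c %% a) && B (c %% b)) (iota 0 (a * b)) =
  (count A (iota 0 a) * count B (iota 0 b))%N.
Proof.
move=> a0 b0 co; rewrite !count_iota_sum.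
pose g (c : 'I_(a * b)) : 'I_a * 'I_b := (Ordinal (ltn_pmod c a0), Ordinal (ltn_pmod c b0)).
have ginj : injective g.
  move=> c c' [e1 e2]; apply: val_inj => /=.
  have := chinese_remainder co c c'; rewrite e1 e2 !eqxx /= => /eqP.
  by rewrite !modn_small.
have gbij : bijective g.
  apply: inj_card_bij => //.
  by rewrite card_prod !card_ord.
rewrite big_distrl /=.
rewrite [RHS](eq_bigr (fun i : 'I_a => \sum_(j < b) (A i * B j)%N)); last by move=> i _; rewrite big_distrr.
rewrite pair_bigA /=.
rewrite (reindex g) /=; last by apply: onW_bij.
apply: eq_bigr => c _; by case: (A _); case: (B _).
Qed.

Definition good (p u : nat) : bool := (u %% p == r4 p) || (u %% p == p - r4 p).
Definition Qp (ps : seq nat) (c : nat) : bool := odd c && all (fun p => good p c) ps.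

Lemma dvd_prod q (ps : seq nat) : q \in ps -> (q %| \prod_(p <- ps) p)%N.
Proof. by move=> qin; rewrite (big_rem q) //= dvdn_mulr. Qed.

Lemma prod_pos (ps : seq nat) : all prime ps -> (0 < \prod_(p <- ps) p)%N.
Proof.
elim: ps => [|p ps IH] /=; first by rewrite big_nil.
by move=> /andP[pp pr]; rewrite big_cons muln_gt0 prime_gt0 // IH.
Qed.

Lemma count_good p : prime p -> (5 <= p)%N -> count (good p) (iota 0 p) = 2%N.
Proof.
move=> pp p5;
have ho : p = (2 * p./2 + 1)%N by rewrite -{1}(odd_double_half p) podd // -muln2; lia. have hr := @r4_lt p p5.
rewrite (@eq_in_count _ _ (predU (pred1 (r4 p)) (pred1 (p - r4 p)))); last first.
  move=> u; rewrite mem_iota add0n => /andP[_ up].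
  by rewrite /good modn_small.
have := count_predUI (pred1 (r4 p)) (pred1 (p - r4 p)) (iota 0 p).
rewrite (@eq_count _ (predI _ _) pred0); last first.
  move=> u /=; apply/negP => /andP[/eqP e1 /eqP e2]; lia.
rewrite count_pred0 !count_uniq_mem ?iota_uniq // !mem_iota !add0n.
have -> : (r4 p < p)%N by lia.
have -> : (p - r4 p < p)%N by lia.
move=> h; lia.
Qed.

Lemma count_Q (ps : seq nat) : sorted ltn ps -> all prime ps -> all (fun p => 5 <= p)%N ps ->
  count (Qp ps) (iota 0 (2 * \prod_(p <- ps) p)) = (2 ^ size ps)%N.
Proof.
elim: ps => [|p ps IH] /=; first by rewrite big_nil.
move=> srt /andP[pp pr] /andP[p5 a5].
have srt' := path_sorted srt.
have minp : all (ltn p) ps := order_path_min ltn_trans srt.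
set P := \prod_(q <- ps) q.
have P0 : (0 < P)%N by apply: prod_pos.
rewrite big_cons -/P.
have -> : (2 * (p * P) = p * (2 * P))%N by rewrite mulnCA.
rewrite (@eq_count _ _ (fun c => good p (c %% p) && Qp ps (c %% (2 * P)))); last first.
  move=> c /=; rewrite /Qp /= /good modn_mod -/(good p c).
  rewrite odd_mod; last by rewrite oddM.
  rewrite andbCA; congr (_ && (_ && _)).
  apply: eq_in_all => q qin /=; rewrite /good.
  have qd : (q %| 2 * P)%N by rewrite dvdn_mull // dvd_prod.
  by rewrite (@modn_dvdm (2 * P) c q qd).
have a0 : (0 < p)%N := prime_gt0 pp.
have b0 : (0 < 2 * P)%N by rewrite muln_gt0 P0.
have co : coprime p (2 * P).
  rewrite coprimeMr !prime_coprime //; apply/andP; split.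
    apply/negP => /(dvdn_leq (isT : (0 < 2)%N)); lia.
  rewrite /P Euclid_dvd_prod // big_has; apply/hasP => [[q qin]].
  rewrite dvdn_prime2 //; last by move/allP: pr; apply.
  move=> /eqP e; move/allP: minp => /(_ q qin) /=; rewrite -e ltnn.
  by [].
by rewrite crt_count // count_good // IH // expnS.
Qed.

Local Open Scope ring_scope.

Lemma modz_mod_dvd (x : int) (d e : nat) : ((x %% (e * d)%N%:Z)%Z %% d%:Z)%Z = (x %% d%:Z)%Z.
Proof.
rewrite [in RHS](divz_eq x (e * d)%N).
by rewrite [X in (_ * X + _)%R]PoszM mulrA modzMDl.
Qed.

Lemma key p (x : int) (M c0 : nat) : prime p -> (5 <= p)%N -> (2 %| M)%N -> (p %| M)%N ->
  (x %% M)%Z = c0%:Z -> nonrank p x <-> odd c0 && good p c0.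
Proof.
move=> pp p5 d2 dp hx; have hr := @r4_lt p p5.
rewrite nonrank_char //.
have e2 : (x %% 2)%Z = (odd c0)%N%:Z.
  by rewrite -(modz_mod_dvd x 2 (M %/ 2)) (divnK d2) hx modz_nat modn2.
have ep : (x %% p)%Z = (c0 %% p)%N%:Z.
  by rewrite -(modz_mod_dvd x p (M %/ p)) (divnK dp) hx modz_nat.
rewrite e2 ep subzn; last by lia.
rewrite /good; split.
- move=> [h1 h2]; apply/andP; split; first by case: (odd c0) h1.
  by case: h2 => [[->]|[->]]; rewrite eqxx ?orbT.
- move=> /andP[-> /orP[/eqP->|/eqP->]]; split => //; by [left|right].
Qed.

Theorem theorem3p13 (ps : seq nat) :
  (0 < size ps)%N ->
  sorted ltn ps ->
  all prime ps ->
  all (fun p => 5 <= p)%N ps ->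
  exists C : {set 'I_(2 * \prod_(p <- ps) p)%N},
    #|C| = (2 ^ size ps)%N /\
    (forall x : int,
       mfold_nonrank ps x <->
       exists2 c, c \in C & (x %% (2 * \prod_(p <- ps) p)%N%:Z)%Z = (nat_of_ord c)%:Z).
Proof.
move=> sz srt pr a5.
set M := (2 * \prod_(p <- ps) p)%N.
have M0 : (0 < M)%N by rewrite /M muln_gt0 prod_pos.
exists [set c : 'I_M | Qp ps c]; split.
  rewrite -sum1_card (eq_bigl (fun c : 'I_M => Qp ps c)); last by move=> c; rewrite inE.
  rewrite -(big_mkord (Qp ps) (fun _ => 1%N)) sum1_count /index_iota subn0.
  exact: count_Q.
move=> x.
set c0 := `|(x %% M)%Z|%N.
have hx : (x %% M)%Z = c0%:Z by rewrite /c0 gez0_abs // modz_ge0 -?lt0n.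
have c0M : (c0 < M)%N.
  have := @ltz_pmod x M%:Z; rewrite ltz_nat M0 hx => /(_ isT) h; by rewrite -ltz_nat.
have eqv : mfold_nonrank ps x <-> Qp ps c0.
  have kp : forall p, p \in ps -> nonrank p x <-> odd c0 && good p c0.
    move=> p pin; apply: (@key p x M c0) => //.
    - by move/allP: pr; apply.
    - by move/allP: a5; apply.
    - exact: dvdn_mulr.
    - by apply: dvdn_mull; apply: dvd_prod.
  split.
  - move=> h; apply/andP; split.
      by have /(kp _ (mem_nth 0%N sz))/andP[] := h _ (mem_nth 0%N sz).
    by apply/allP => q qin; have /(kp q qin)/andP[] := h q qin.
  - move=> /andP[o /allP a] p pin; apply/(kp p pin); rewrite o a.
    by []. by [].
rewrite eqv; split.
- move=> q; exists (Ordinal c0M) => //; by rewrite inE.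
- move=> [c]; rewrite inE hx => qc [e]; by rewrite e.
Qed.
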